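(* $\mathrm{Aut}_{\mathbb Z}(L)$ is equal to each of the groups $\langle -(x\,y)\rangle\ltimes G$, $\langle -(y\,z)\rangle\ltimes G$, $\langle -(z\,x)\rangle\ltimes G$. In particular $\mathrm{Aut}_{\mathbb Z}(L)\cong\mathbb Z_2\ltimes G$.
   Context: $\mathbb F$ is a field of characteristic zero, $\mathfrak{sl}_2$ the Lie algebra of $2\times2$ trace-zero matrices over $\mathbb F$. Equitable basis: $x=\begin{pmatrix}1&0\\0&-1\end{pmatrix}$, $y=\begin{pmatrix}-1&2\\0&1\end{pmatrix}$, $z=\begin{pmatrix}-1&0\\-2&1\end{pmatrix}$, and $L=\mathbb Zx\oplus\mathbb Zy\oplus\mathbb Zz$. Let $x^*=\begin{pmatrix}1&-1\\1&-1\end{pmatrix}$, $y^*=\begin{pmatrix}0&0\\1&0\end{pmatrix}$, $z^*=\begin{pmatrix}0&-1\\0&0\end{pmatrix}$; $G$ is the subgroup of $\mathrm{Aut}_{\mathbb F}(\mathfrak{sl}_2)$ generated by $\exp(\mathrm{ad}\,x^* ),\exp(\mathrm{ad}\,y^* ),\exp(\mathrm{ad}\,z^* )$. $\mathrm{Aut}_{\mathbb Z}(L)$ is the group of Lie algebra automorphisms $\varphi$ of $\mathfrak{sl}_2$ with $\varphi(L)=L$. For distinct $u,v\in\{x,y,z\}$, $(u\,v)$ is the $\mathbb F$-linear map interchanging $u,v$ and fixing the third basis element, and $-(u\,v)$ is its negative. *)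

(* Defs.v *)
From HB Require Import structures.
From mathcomp Require Import all_boot all_order all_algebra.
Set Implicit Arguments. Unset Strict Implicit. Unset Printing Implicit Defensive.
Import Order.TTheory GRing.Theory Num.Theory.
Local Open Scope ring_scope.

Section SL2.
Variable F : fieldType.

Definition mx2 (a b c d : F) : 'M[F]_2 :=
  \matrix_(i < 2, j < 2)
    if (i : nat) == 0%N then (if (j : nat) == 0%N then a else b)
    else (if (j : nat) == 0%N then c else d).

Definition in_sl2 (M : 'M[F]_2) : Prop := \tr M = 0.
Definition lie (M N : 'M[F]_2) : 'M[F]_2 := M *m N - N *m M.

Definition ex : 'M[F]_2 := mx2 1 0 0 (-1).
Definition ey : 'M[F]_2 := mx2 (-1) 2 0 1.
Definition ez : 'M[F]_2 := mx2 (-1) 0 (-2) 1.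
Definition bas (j : 'I_3) : 'M[F]_2 :=
  match val j with 0 => ex | 1 => ey | _ => ez end.

(** Coordinates of a trace-zero matrix [[a,b],[c,-a]] in the basis (x,y,z):
    M = alpha x + beta y + gamma z with beta = b/2, gamma = -c/2,
    alpha = a + b/2 - c/2. *)
Definition coord (M : 'M[F]_2) : 'cV[F]_3 :=
  \col_(i < 3)
    match val i with
    | 0 => M 0 0 + M 0 1 / 2%:R - M 1 0 / 2%:R
    | 1 => M 0 1 / 2%:R
    | _ => - (M 1 0 / 2%:R)
    end.

(** An F-linear endomorphism of sl2 is represented by its 3x3 matrix A
    in the basis (x,y,z):  phi(b_j) = sum_i A i j b_i.  Composition of maps
    corresponds to matrix product. *)
Definition lin (A : 'M[F]_3) (M : 'M[F]_2) : 'M[F]_2 :=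
  \sum_(i < 3) (A *m coord M) i 0 *: bas i.

Definition mat_of (f : 'I_3 -> 'M[F]_2) : 'M[F]_3 :=
  \matrix_(i < 3, j < 3) coord (f j) i 0.

Definition LieAut (A : 'M[F]_3) : Prop :=
  A \in unitmx /\
  (forall M N, in_sl2 M -> in_sl2 N -> lin A (lie M N) = lie (lin A M) (lin A N)).

Definition inL (M : 'M[F]_2) : Prop :=
  exists a b c : int, M = a%:~R *: ex + b%:~R *: ey + c%:~R *: ez.

Definition AutZ (A : 'M[F]_3) : Prop :=
  LieAut A /\
  (forall M, inL M -> inL (lin A M)) /\
  (forall N, inL N -> exists M, inL M /\ lin A M = N).

Definition ad_mx (a : 'M[F]_2) : 'M[F]_3 := mat_of (fun j => lie a (bas j)).

(** exponential of a nilpotent 3x3 matrix N (N^3 = 0, so the series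
    sum_k N^k/k! stops at k = 2) *)
Definition exp_nil (N : 'M[F]_3) : 'M[F]_3 :=
  \sum_(k < 3) (k`!%:R)^-1 *: N ^+ k.

Definition xs : 'M[F]_2 := mx2 1 (-1) 1 (-1).
Definition ys : 'M[F]_2 := mx2 0 0 1 0.
Definition zs : 'M[F]_2 := mx2 0 (-1) 0 0.

Inductive gen (S : 'M[F]_3 -> Prop) : 'M[F]_3 -> Prop :=
  | gen_one : gen S 1
  | gen_base a : S a -> gen S a
  | gen_inv a : gen S a -> gen S (invmx a)
  | gen_mul a b : gen S a -> gen S b -> gen S (a *m b).

(** G = < exp(ad xs), exp(ad ys), exp(ad zs) >, xs = x^*, etc. *)
Definition Ggrp : 'M[F]_3 -> Prop :=
  gen (fun a => a = exp_nil (ad_mx xs) \/ a = exp_nil (ad_mx ys)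
                \/ a = exp_nil (ad_mx zs)).

Definition neg_swap (u v : 'I_3) : 'M[F]_3 :=
  mat_of (fun j => - bas (if j == u then v else if j == v then u else j)).

End SL2.

(* Main.v *)
Require Import Defs.
From HB Require Import structures.
From mathcomp Require Import all_boot all_order all_algebra.
Import Order.TTheory GRing.Theory Num.Theory.
Local Open Scope ring_scope.
From Stdlib Require Import Ring Field ZArith Lia List Bool.

Local Open Scope Z_scope.
Record M3 := mkM { m00:Z; m01:Z; m02:Z; m10:Z; m11:Z; m12:Z; m20:Z; m21:Z; m22:Z }.
Record V3 := mkV { v0:Z; v1:Z; v2:Z }.
Definition mv (A:M3) (u:V3) : V3 :=
  mkV (m00 A* v0 u + m01 A* v1 u + m02 A* v2 u)
      (m10 A* v0 u + m11 A* v1 u + m12 A* v2 u)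
      (m20 A* v0 u + m21 A* v1 u + m22 A* v2 u).
Definition mm (A B:M3) : M3 :=
  mkM (m00 A* m00 B + m01 A* m10 B + m02 A* m20 B)
      (m00 A* m01 B + m01 A* m11 B + m02 A* m21 B)
      (m00 A* m02 B + m01 A* m12 B + m02 A* m22 B)
      (m10 A* m00 B + m11 A* m10 B + m12 A* m20 B)
      (m10 A* m01 B + m11 A* m11 B + m12 A* m21 B)
      (m10 A* m02 B + m11 A* m12 B + m12 A* m22 B)
      (m20 A* m00 B + m21 A* m10 B + m22 A* m20 B)
      (m20 A* m01 B + m21 A* m11 B + m22 A* m21 B)
      (m20 A* m02 B + m21 A* m12 B + m22 A* m22 B).
Definition idM := mkM 1 0 0 0 1 0 0 0 1.
Definition br (u w : V3) : V3 :=
  let a := v0 u* v1 w - v1 u* v0 w in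
  let b := v1 u* v2 w - v2 u* v1 w in
  let c := v2 u* v0 w - v0 u* v2 w in
  mkV (2* a+2* c) (2* a+2* b) (2* b+2* c).
Definition PZ (B : M3) : Prop :=
  (forall u w, mv B (br u w) = br (mv B u) (mv B w)) /\
  exists C, mm B C = idM /\ mm C B = idM.

Definition gX := mkM 1 0 0 2 2 (-1) 0 1 0.
Definition gY := mkM 0 0 1 0 1 0 (-1) 2 2.
Definition gZ := mkM 2 (-1) 2 1 0 0 0 0 1.
Definition gXi := mkM 1 0 0 0 0 1 2 (-1) 2.
Definition gYi := mkM 2 2 (-1) 0 1 0 1 0 0.
Definition gZi := mkM 0 1 0 (-1) 2 2 0 0 1.
Definition Dm := mkM 1 (-2) (-2) 0 (-1) 0 0 0 (-1).
Definition s01 := mkM 0 (-1) 0 (-1) 0 0 0 0 (-1).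
Definition s12 := mkM (-1) 0 0 0 0 (-1) 0 (-1) 0.
Definition s20 := mkM 0 0 (-1) 0 (-1) 0 (-1) 0 0.

Inductive gk := kX | kY | kZ | kXi | kYi | kZi.
Definition zgen k := match k with kX => gX | kY => gY | kZ => gZ | kXi => gXi | kYi => gYi | kZi => gZi end.
Definition ginv k := match k with kX => kXi | kY => kYi | kZ => kZi | kXi => kX | kYi => kY | kZi => kZ end.
Inductive GZ : M3 -> Prop :=
 | GZ1 : GZ idM
 | GZs k B : GZ B -> GZ (mm (zgen k) B).

Ltac meq := repeat match goal with A : M3 |- _ => destruct A | u : V3 |- _ => destruct u end;
  unfold mm, mv, idM, br, zgen, gX, gY, gZ, gXi, gYi, gZi, Dm, s01, s12, s20; cbn [m00 m01 m02 m10 m11 m12 m20 m21 m22 v0 v1 v2]; f_equal; ring.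

Lemma mm_assoc A B C : mm A (mm B C) = mm (mm A B) C. Proof. meq. Qed.
Lemma mm1l A : mm idM A = A. Proof. meq. Qed.
Lemma mm1r A : mm A idM = A. Proof. meq. Qed.
Lemma mv_mm A B u : mv (mm A B) u = mv A (mv B u). Proof. meq. Qed.

Lemma zgen_inv k : mm (zgen k) (zgen (ginv k)) = idM /\ mm (zgen (ginv k)) (zgen k) = idM.
Proof. destruct k; split; reflexivity. Qed.

Lemma GZ_mul A B : GZ A -> GZ B -> GZ (mm A B).
Proof. induction 1; intros HB. rewrite mm1l; auto. rewrite -mm_assoc; constructor; auto. Qed.
Lemma GZ_gen k : GZ (zgen k).
Proof. rewrite -(mm1r (zgen k)); constructor; constructor. Qed.
Lemma GZ_inv A : GZ A -> exists A', GZ A' /\ mm A A' = idM /\ mm A' A = idM.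
Proof.
induction 1. exists idM; split; [constructor| split; reflexivity].
destruct IHGZ as [A' [HA' [H1 H2]]]. exists (mm A' (zgen (ginv k))). split.
apply GZ_mul; auto; apply GZ_gen.
destruct (zgen_inv k) as [E1 E2]. split.
rewrite mm_assoc -(mm_assoc (zgen k)) H1 mm1r; auto.
rewrite mm_assoc -(mm_assoc A') E2 mm1r; auto.
Qed.

Lemma PZ_id : PZ idM.
Proof. split. intros; meq. exists idM; split; reflexivity. Qed.
Lemma PZ_mul A B : PZ A -> PZ B -> PZ (mm A B).
Proof.
intros [HA [CA [HA1 HA2]]] [HB [CB [HB1 HB2]]]; split.
intros u w; rewrite !mv_mm HB HA; reflexivity.
exists (mm CB CA); split.
rewrite mm_assoc -(mm_assoc A) HB1 mm1r; auto.
rewrite mm_assoc -(mm_assoc CB) HA2 mm1r; auto.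
Qed.
Lemma PZ_gen k : PZ (zgen k).
Proof. split. intros u w; destruct k; meq. exists (zgen (ginv k)); apply zgen_inv. Qed.
Lemma GZ_PZ B : GZ B -> PZ B.
Proof. induction 1. apply PZ_id. apply PZ_mul; auto; apply PZ_gen. Qed.

Lemma nil_lemma p0 p1 p2 a b c : 2* (p0* b - p1* a) + 2* (p2* a - p0* c) = 2* a ->
  2* (p0* b - p1* a) + 2* (p1* c - p2* b) = 2* b -> 2* (p1* c - p2* b) + 2* (p2* a - p0* c) = 2* c ->
  (a-b-c)* (a-b-c) = 4* b* c.
Proof.
intros H0 H1 H2.
assert (Q : 2* ((2* (p0* b - p1* a) + 2* (p2* a - p0* c)) - (2* (p0* b - p1* a) + 2* (p1* c - p2* b)) - (2* (p1* c - p2* b) + 2* (p2* a - p0* c)))* (a-b-c)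
   - 4* (2* (p0* b - p1* a) + 2* (p1* c - p2* b))* c - 4* (2* (p1* c - p2* b) + 2* (p2* a - p0* c))* b = 0) by ring.
rewrite H0 H1 H2 in Q. nia.
Qed.
Lemma ineq a b c : (a-b-c)* (a-b-c) = 4* b* c -> b <> 0 -> c <> 0 ->
  Z.abs a < Z.abs b \/ Z.abs (2* b+2* c-a) < Z.abs b \/ Z.abs (2* b+2* c-a) < Z.abs c \/ Z.abs a < Z.abs c.
Proof.
intros H Hb Hc.
assert (Hbc0 : b * c <> 0) by (apply Z.neq_mul_0; auto).
pose proof (Z.square_nonneg (a-b-c)). assert (Hbc : 0 < b * c) by lia.
destruct (Z_lt_le_dec 0 b); destruct (Z_lt_le_dec 0 c); try nia;
destruct (Z_lt_le_dec (a-b-c) 0);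
destruct (Z_le_gt_dec (Z.abs c) (Z.abs b)).
all: try (left; nia); try (right; left; nia); try (right; right; left; nia); try (right; right; right; nia).
Qed.

Ltac cbnM := cbn [mm mv idM br m00 m01 m02 m10 m11 m12 m20 m21 m22 v0 v1 v2] in *.
Lemma V3_inj a b c a' b' c' : mkV a b c = mkV a' b' c' -> a = a' /\ b = b' /\ c = c'.
Proof. intros H; injection H; auto. Qed.
Lemma M3_inj a b c d e f g h i a' b' c' d' e' f' g' h' i' :
  mkM a b c d e f g h i = mkM a' b' c' d' e' f' g' h' i' ->
  a = a' /\ b = b' /\ c = c' /\ d = d' /\ e = e' /\ f = f' /\ g = g' /\ h = h' /\ i = i'.
Proof. intros H; injection H; intuition. Qed.
Ltac vsplit H := let a := fresh "Ha" in let b := fresh "Hb" in let c := fresh "Hc" in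
  apply V3_inj in H; destruct H as [a [b c]].
Ltac msplit H := apply M3_inj in H; decompose [and] H; clear H.
Lemma stage3 B k : PZ B -> m00 B = 1 -> m10 B = 0 -> m20 B = 0 ->
  m00 B + m01 B = k -> m10 B + m11 B = k -> m20 B + m21 B = 0 -> B = idM \/ B = Dm.
Proof.
intros [HB [C [_ HC]]] E0 E1 E2 E3 E4 E5.
pose proof (HB (mkV 1 0 0) (mkV 0 0 1)) as H1.
pose proof (HB (mkV 0 1 0) (mkV 0 0 1)) as H2.
clear HB.
destruct B as [b00 b01 b02 b10 b11 b12 b20 b21 b22]; destruct C as [c00 c01 c02 c10 c11 c12 c20 c21 c22].
unfold mm, mv, idM, br in *; cbnM.
msplit HC. vsplit H1. vsplit H2.
assert (Hk : k * (1 + c01) = 1) by nia.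
apply Z.eq_mul_1 in Hk.
subst b00 b10 b20. assert (b01 = k - 1) by lia. assert (b11 = k) by lia. assert (b21 = 0) by lia. subst b01 b11 b21.
destruct Hk as [Hk|Hk]; subst k; [left|right]; unfold Dm; f_equal; lia.
Qed.
Lemma stage2' n : forall B k, PZ B -> m20 B = 0 -> m00 B = 1 + m10 B ->
  m00 B + m01 B = k -> m10 B + m11 B = k -> m20 B + m21 B = 0 ->
  Z.abs (m10 B) <= Z.of_nat n -> exists g, GZ g /\ (mm g B = idM \/ mm g B = Dm).
Proof.
induction n as [|n IH]; intros B k HP E1 E2 E3 E4 E5 Hn.
- exists idM; split; [constructor|]. rewrite mm1l. apply (stage3 B k); auto; lia.
- destruct (Z.eq_dec (m10 B) 0) as [Hz|Hz].
  + exists idM; split; [constructor|]. rewrite mm1l. apply (stage3 B k); auto; lia.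
  + destruct (Z_lt_le_dec 0 (m10 B)) as [Hp|Hp].
    * destruct (IH (mm (zgen kZi) B) k) as [g [Hg Hg']].
      { apply PZ_mul; auto; apply PZ_gen. }
      all: try (destruct B; unfold zgen, gZi, mm in *; cbnM; lia).
      exists (mm g (zgen kZi)); split. apply GZ_mul; auto; apply GZ_gen.
      rewrite -mm_assoc; auto.
    * destruct (IH (mm (zgen kZ) B) k) as [g [Hg Hg']].
      { apply PZ_mul; auto; apply PZ_gen. }
      all: try (destruct B; unfold zgen, gZ, mm in *; cbnM; lia).
      exists (mm g (zgen kZ)); split. apply GZ_mul; auto; apply GZ_gen.
      rewrite -mm_assoc; auto.
Qed.

Lemma stage2 B k : PZ B -> k <> 0 ->
  m00 B + m01 B = k -> m10 B + m11 B = k -> m20 B + m21 B = 0 ->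
  exists g, GZ g /\ (mm g B = idM \/ mm g B = Dm).
Proof.
intros HP Hk E3 E4 E5.
pose proof (proj1 HP (mkV 1 0 0) (mkV 1 1 0)) as H1.
assert (m20 B = 0 /\ m00 B = 1 + m10 B) as [E1 E2].
{ destruct B as [p0 q0 r0 p1 q1 r1 p2 q2 r2]; unfold mv, br in *; cbnM. vsplit H1. assert (q0 = k - p0) by lia. assert (q1 = k - p1) by lia. assert (q2 = - p2) by lia. subst q0 q1 q2.
  assert (k * (p0 - p1 + p2 - 1) = 0) by nia.
  assert (k * (p0 - p1 - p2 - 1) = 0) by nia.
  apply Z.mul_eq_0 in H; apply Z.mul_eq_0 in H0. lia. }
apply (stage2' (Z.abs_nat (m10 B)) B k); auto. lia.
Qed.
Lemma stage1 n : forall B, PZ B ->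
  Z.abs (m10 B + m11 B) + Z.abs (m20 B + m21 B) <= Z.of_nat n ->
  exists g, GZ g /\ (mm g B = idM \/ mm g B = Dm).
Proof.
induction n as [|n IH]; intros B HP Hn;
pose proof (proj1 HP (mkV 1 0 0) (mkV 1 1 0)) as H1;
destruct (proj2 HP) as [C [_ HC]];
assert (Hnil : (m00 B + m01 B - (m10 B + m11 B) - (m20 B + m21 B)) *
  (m00 B + m01 B - (m10 B + m11 B) - (m20 B + m21 B)) = 4 * (m10 B + m11 B) * (m20 B + m21 B))
 by (destruct B as [p0 q0 r0 p1 q1 r1 p2 q2 r2]; unfold mv, br in *; cbnM; vsplit H1;
     apply (nil_lemma p0 p1 p2); nia);
assert (Hw : m00 B + m01 B <> 0 \/ m10 B + m11 B <> 0 \/ m20 B + m21 B <> 0)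
 by (destruct B as [p0 q0 r0 p1 q1 r1 p2 q2 r2]; destruct C; unfold mm, idM in *; cbnM; msplit HC; nia).
- apply (stage2 B (m10 B + m11 B)); auto; nia.
- destruct (Z.eq_dec (m20 B + m21 B) 0) as [Hc|Hc].
  { apply (stage2 B (m10 B + m11 B)); auto; nia. }
  destruct (Z.eq_dec (m10 B + m11 B) 0) as [Hb|Hb].
  { destruct (stage2 (mm (zgen kX) B) (m20 B + m21 B)) as [g [Hg Hg']].
    apply PZ_mul; auto; apply PZ_gen. auto.
    all: try (destruct B; unfold zgen, gX, mm in *; cbnM; nia).
    exists (mm g (zgen kX)); split. apply GZ_mul; auto; apply GZ_gen.
    rewrite -mm_assoc; auto. }
  destruct (ineq _ _ _ Hnil Hb Hc) as [Hm|[Hm|[Hm|Hm]]];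
  [ pose (k := kZ) | pose (k := kZi) | pose (k := kY) | pose (k := kYi) ];
  (destruct (IH (mm (zgen k) B)) as [g [Hg Hg']];
   [ apply PZ_mul; auto; apply PZ_gen
   | destruct B; unfold k, zgen, gZ, gZi, gY, gYi, mm in *; cbnM; lia
   | exists (mm g (zgen k)); split; [apply GZ_mul; auto; apply GZ_gen | rewrite -mm_assoc; auto]]).
Qed.

Lemma descent B : PZ B -> exists g, GZ g /\ (mm g B = idM \/ mm g B = Dm).
Proof.
intros HP. apply (stage1 (Z.abs_nat (Z.abs (m10 B + m11 B) + Z.abs (m20 B + m21 B)))); auto. lia.
Qed.

Definition sc01 k := match k with kX => kYi | kY => kXi | kZ => kZi | kXi => kY | kYi => kX | kZi => kZ end.
Definition sc12 k := match k with kX => kXi | kY => kZi | kZ => kYi | kXi => kX | kYi => kZ | kZi => kY end.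
Definition sc20 k := match k with kX => kZi | kY => kYi | kZ => kXi | kXi => kZ | kYi => kY | kZi => kX end.

Lemma s_normal s sc : mm s s = idM -> (forall k, mm (mm s (zgen k)) s = zgen (sc k)) ->
  forall B, GZ B -> GZ (mm (mm s B) s).
Proof.
intros Hs Hk B HB; induction HB.
- rewrite mm1r Hs; constructor.
- replace (mm (mm s (mm (zgen k) B)) s) with (mm (mm (mm s (zgen k)) s) (mm (mm s B) s)).
  rewrite Hk. apply GZ_mul; auto; apply GZ_gen.
  rewrite -!mm_assoc (mm_assoc s s) Hs mm1l; reflexivity.
Qed.

Lemma s01_sq : mm s01 s01 = idM. Proof. reflexivity. Qed.
Lemma s12_sq : mm s12 s12 = idM. Proof. reflexivity. Qed.
Lemma s20_sq : mm s20 s20 = idM. Proof. reflexivity. Qed.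
Lemma s01_conj k : mm (mm s01 (zgen k)) s01 = zgen (sc01 k). Proof. destruct k; reflexivity. Qed.
Lemma s12_conj k : mm (mm s12 (zgen k)) s12 = zgen (sc12 k). Proof. destruct k; reflexivity. Qed.
Lemma s20_conj k : mm (mm s20 (zgen k)) s20 = zgen (sc20 k). Proof. destruct k; reflexivity. Qed.
Lemma s01_D : GZ (mm s01 Dm).
Proof. replace (mm s01 Dm) with (mm (zgen kZi) idM) by reflexivity. repeat constructor. Qed.
Lemma s12_D : GZ (mm s12 Dm).
Proof. replace (mm s12 Dm) with (mm (zgen kZ) (mm (zgen kZ) (mm (zgen kX) idM))) by reflexivity. repeat constructor. Qed.
Lemma s20_D : GZ (mm s20 Dm).
Proof. replace (mm s20 Dm) with (mm (zgen kY) idM) by reflexivity. repeat constructor. Qed.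

Definition md (z : Z) := z mod 3.
Definition mod3 (A : M3) : M3 :=
  mkM (md (m00 A)) (md (m01 A)) (md (m02 A)) (md (m10 A)) (md (m11 A)) (md (m12 A))
      (md (m20 A)) (md (m21 A)) (md (m22 A)).
Lemma md3 a1 a2 a3 b1 b2 b3 :
  md (a1 * md b1 + a2 * md b2 + a3 * md b3) = md (a1 * b1 + a2 * b2 + a3 * b3).
Proof.
unfold md. rewrite (Z.mod_eq b1); [|lia]. rewrite (Z.mod_eq b2); [|lia]. rewrite (Z.mod_eq b3); [|lia].
replace (a1 * (b1 - 3 * (b1 / 3)) + a2 * (b2 - 3 * (b2 / 3)) + a3 * (b3 - 3 * (b3 / 3)))
  with ((a1 * b1 + a2 * b2 + a3 * b3) + (- (a1 * (b1/3) + a2 * (b2/3) + a3 * (b3/3))) * 3) by ring.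
apply Z_mod_plus_full.
Qed.
Lemma mod3_mul A B : mod3 (mm A B) = mod3 (mm A (mod3 B)).
Proof. destruct A, B; unfold mod3, mm; cbnM; f_equal; symmetry; apply md3. Qed.

Definition M3eqb (A B : M3) : bool :=
  Z.eqb (m00 A) (m00 B) && Z.eqb (m01 A) (m01 B) && Z.eqb (m02 A) (m02 B) &&
  Z.eqb (m10 A) (m10 B) && Z.eqb (m11 A) (m11 B) && Z.eqb (m12 A) (m12 B) &&
  Z.eqb (m20 A) (m20 B) && Z.eqb (m21 A) (m21 B) && Z.eqb (m22 A) (m22 B).
Lemma M3eqb_eq A B : M3eqb A B = true -> A = B.
Proof.
destruct A, B; unfold M3eqb; cbnM. intros H.
repeat match goal with H : _ && _ = true |- _ => apply andb_prop in H; destruct H end.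
repeat match goal with H : Z.eqb _ _ = true |- _ => apply Z.eqb_eq in H end.
subst; reflexivity.
Qed.
Definition S12 : list M3 :=
  mkM 0 0 1 0 1 0 2 2 2 :: mkM 0 0 1 1 0 0 0 1 0 :: mkM 0 0 1 2 2 2 1 0 0 ::
  mkM 0 1 0 0 0 1 1 0 0 :: mkM 0 1 0 1 0 0 2 2 2 :: mkM 0 1 0 2 2 2 0 0 1 ::
  mkM 1 0 0 0 0 1 2 2 2 :: mkM 1 0 0 0 1 0 0 0 1 :: mkM 1 0 0 2 2 2 0 1 0 ::
  mkM 2 2 2 0 0 1 0 1 0 :: mkM 2 2 2 0 1 0 1 0 0 :: mkM 2 2 2 1 0 0 0 0 1 :: nil.
Definition inS (A : M3) : bool := existsb (fun t => M3eqb t A) S12.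
Lemma inS_spec A : inS A = true -> exists t, In t S12 /\ t = A.
Proof.
unfold inS; intros H; apply existsb_exists in H; destruct H as [t [Ht Ht']].
exists t; split; auto; apply M3eqb_eq; auto.
Qed.
Definition allk := kX :: kY :: kZ :: kXi :: kYi :: kZi :: nil.
Lemma S12_closed : forallb (fun t => forallb (fun k => inS (mod3 (mm (zgen k) t))) allk) S12 = true.
Proof. vm_compute. reflexivity. Qed.
Lemma GZ_mod3 B : GZ B -> inS (mod3 B) = true.
Proof.
induction 1. vm_compute; reflexivity.
rewrite mod3_mul. apply inS_spec in IHGZ. destruct IHGZ as [t [Ht Et]]. rewrite -Et.
pose proof (proj1 (forallb_forall _ _) S12_closed t Ht) as H1.
apply (proj1 (forallb_forall _ _) H1). destruct k; simpl; tauto.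
Qed.
Lemma s01_notG : ~ GZ s01.
Proof. intros H; apply GZ_mod3 in H; vm_compute in H; discriminate. Qed.
Lemma s12_notG : ~ GZ s12.
Proof. intros H; apply GZ_mod3 in H; vm_compute in H; discriminate. Qed.
Lemma s20_notG : ~ GZ s20.
Proof. intros H; apply GZ_mod3 in H; vm_compute in H; discriminate. Qed.

Local Close Scope Z_scope.
Local Open Scope ring_scope.

Set Implicit Arguments. Unset Strict Implicit. Unset Printing Implicit Defensive.

Section Fpart.
Variable F : fieldType.
Hypothesis charF0 : [pchar F] =i pred0.
Definition Fc := GRing.Field.sort F.
Definition fadd (x y : Fc) : Fc := x + y.
Definition fmul (x y : Fc) : Fc := x * y.
Definition fopp (x : Fc) : Fc := - x.
Definition fsub (x y : Fc) : Fc := x - y.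
Definition finv (x : Fc) : Fc := x^-1.
Definition fdiv (x y : Fc) : Fc := x / y.
Definition f0 : Fc := 0.
Definition f1 : Fc := 1.
Lemma Ffield : @field_theory Fc f0 f1 fadd fmul fsub fopp fdiv finv eq.
Proof.
constructor.
constructor => //; rewrite /fadd /fmul /fsub /fopp /f0 /f1.
exact: add0r. exact: addrC. exact: addrA. exact: mul1r. exact: mulrC. exact: mulrA. exact: mulrDl. exact: subrr.
rewrite /f1 /f0; apply/eqP; exact: oner_neq0.
by [].
move=> p Hp; rewrite /fmul /finv mulVf //; exact/eqP.
Qed.
Add Field Ff : Ffield.
Lemma faddE (x y : F) : x + y = fadd x y. Proof. by []. Qed.
Lemma fmulE (x y : F) : x * y = fmul x y. Proof. by []. Qed.
Lemma foppE (x : F) : - x = fopp x. Proof. by []. Qed.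
Lemma finvE (x : F) : x^-1 = finv x. Proof. by []. Qed.
Lemma f0E : 0 = f0 :> F. Proof. by []. Qed.
Lemma f1E : 1 = f1 :> F. Proof. by []. Qed.
Ltac fnorm := rewrite ?mulrS ?mulr0n ?finvE ?faddE ?fmulE ?foppE ?f0E ?f1E;
  match goal with |- @eq _ ?a ?b => change (@eq Fc a b) end.
Ltac fring := fnorm; ring.
Lemma two_neq0 : fadd f1 f1 <> f0.
Proof. rewrite /fadd /f1 /f0 -mulr2n. move/eqP. by rewrite ((pcharf0P F).1 charF0). Qed.
Ltac ffield := fnorm; field; try exact two_neq0.

Lemma natF_inj (p q : nat) : (p%:R : F) = q%:R -> p = q.
Proof.
wlog le_pq : p q / (p <= q)%nat.
  move=> W H; case/orP: (leq_total p q) => h; [exact: W|symmetry; exact: W].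
move=> H; move: (subnKC le_pq) => E.
rewrite -E natrD in H. have : ((q - p)%nat%:R : F) = 0.
  by apply: (@addrI _ (p%:R)); rewrite addr0 -H.
move/eqP; rewrite ((pcharf0P F).1 charF0) => /eqP h.
by rewrite -E h addn0.
Qed.

Definition zr (z : Z) : F := (Z.to_nat z)%:R - (Z.to_nat (- z))%:R.
Lemma zr_rep z p q : (z = Z.of_nat p - Z.of_nat q)%Z -> zr z = p%:R - q%:R.
Proof.
move=> H; rewrite /zr.
have E : (Z.to_nat z + q = p + Z.to_nat (- z))%coq_nat by lia.
have L1 : ((Z.to_nat z)%:R - (Z.to_nat (-z))%:R : F) = (Z.to_nat z + q)%nat%:R - (q + Z.to_nat (-z))%nat%:R
  by rewrite !natrD; fring.
have L2 : (p%:R - q%:R : F) = (p + Z.to_nat (- z))%nat%:R - (q + Z.to_nat (-z))%nat%:R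
  by rewrite !natrD; fring.
by rewrite L1 L2 -plusE E plusE.
Qed.
Lemma zr_add a b : zr (a + b) = zr a + zr b.
Proof.
rewrite (@zr_rep (a + b) (Z.to_nat a + Z.to_nat b)%coq_nat (Z.to_nat (-a) + Z.to_nat (-b))%coq_nat); last by lia.
rewrite /zr !plusE !natrD; fring.
Qed.
Lemma zr_mul a b : zr (a * b) = zr a * zr b.
Proof.
rewrite (@zr_rep (a * b) (Z.to_nat a * Z.to_nat b + Z.to_nat (-a) * Z.to_nat (-b))%coq_nat
   (Z.to_nat a * Z.to_nat (-b) + Z.to_nat (-a) * Z.to_nat b)%coq_nat); last first.
  have Ha : (a = Z.of_nat (Z.to_nat a) - Z.of_nat (Z.to_nat (-a)))%Z by lia.
  have Hb : (b = Z.of_nat (Z.to_nat b) - Z.of_nat (Z.to_nat (-b)))%Z by lia.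
  move: Ha Hb; generalize (Z.to_nat a) (Z.to_nat (-a)) (Z.to_nat b) (Z.to_nat (-b)) => pa na pb nb -> ->.
  rewrite !Nat2Z.inj_add !Nat2Z.inj_mul; ring.
rewrite /zr !plusE ?multE !natrD !natrM; fring.
Qed.
Lemma zr_opp a : zr (- a) = - zr a.
Proof. rewrite /zr Z.opp_involutive; fring. Qed.
Lemma zr_sub a b : zr (a - b) = zr a - zr b.
Proof. by rewrite -Z.add_opp_r zr_add zr_opp. Qed.
Lemma zr0 : zr 0 = 0. Proof. rewrite /zr /=; fring. Qed.
Lemma zr1 : zr 1 = 1. Proof. rewrite /zr /=; fring. Qed.
Lemma zr_inj a b : zr a = zr b -> a = b.
Proof.
move=> H. have : zr (a - b) = 0 by rewrite zr_sub H subrr.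
rewrite /zr => /eqP; rewrite subr_eq0 => /eqP /natF_inj; lia.
Qed.

Definition i0 : 'I_3 := @Ordinal 3 0 isT.
Definition i1 : 'I_3 := @Ordinal 3 1 isT.
Definition i2 : 'I_3 := @Ordinal 3 2 isT.
Definition j0 : 'I_2 := @Ordinal 2 0 isT.
Definition j1 : 'I_2 := @Ordinal 2 1 isT.
Lemma ord3P (P : 'I_3 -> Prop) : P i0 -> P i1 -> P i2 -> forall i, P i.
Proof.
move=> H0 H1 H2 [[|[|[|n]]] Hn]; last by [].
- by have -> : Ordinal Hn = i0 by apply: val_inj.
- by have -> : Ordinal Hn = i1 by apply: val_inj.
- by have -> : Ordinal Hn = i2 by apply: val_inj.
Qed.
Lemma ord2P (P : 'I_2 -> Prop) : P j0 -> P j1 -> forall i, P i.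
Proof.
move=> H0 H1 [[|[|n]] Hn]; last by [].
- by have -> : Ordinal Hn = j0 by apply: val_inj.
- by have -> : Ordinal Hn = j1 by apply: val_inj.
Qed.
Lemma z0 : (0 : 'I_2) = j0. Proof. by apply: val_inj. Qed.
Lemma z1 : (1 : 'I_2) = j1. Proof. by apply: val_inj. Qed.
Lemma sum3 (V : nmodType) (f : 'I_3 -> V) : \sum_(i < 3) f i = f i0 + f i1 + f i2.
Proof.
rewrite !big_ord_recl big_ord0 addr0 addrA.
congr (f _ + f _ + f _); by apply: val_inj.
Qed.
Lemma sum2 (V : nmodType) (f : 'I_2 -> V) : \sum_(i < 2) f i = f j0 + f j1.
Proof.
rewrite !big_ord_recl big_ord0 addr0.
congr (f _ + f _); by apply: val_inj.
Qed.

Notation ex := (ex F). Notation ey := (ey F). Notation ez := (ez F).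
Notation mx2 := (mx2 (F:=F)).
Definition Fv := (F * F * F)%type.
Definition recF (v : Fv) : 'M[F]_2 := v.1.1 *: ex + v.1.2 *: ey + v.2 *: ez.
Lemma mx2E a b c d : [/\ mx2 a b c d j0 j0 = a, mx2 a b c d j0 j1 = b,
   mx2 a b c d j1 j0 = c & mx2 a b c d j1 j1 = d].
Proof. by rewrite /Defs.mx2 !mxE. Qed.
Lemma mx2_eq (M N : 'M[F]_2) : M j0 j0 = N j0 j0 -> M j0 j1 = N j0 j1 -> M j1 j0 = N j1 j0 -> M j1 j1 = N j1 j1 -> M = N.
Proof. move=> *; apply/matrixP; apply: ord2P; apply: ord2P => //. Qed.
Lemma recF_mx2 (v : Fv) : recF v =
  mx2 (v.1.1 - v.1.2 - v.2) (2%:R * v.1.2) (-(2%:R) * v.2) (- v.1.1 + v.1.2 + v.2).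
Proof.
case: v => [[a b] c]; rewrite /recF /=.
apply: mx2_eq; rewrite !mxE /=; fring.
Qed.
Definition c2v (c : 'cV[F]_3) : Fv := (c i0 0, c i1 0, c i2 0).
Lemma coord_mx2 a b c d : c2v (Defs.coord (mx2 a b c d)) = (a + b / 2%:R - c / 2%:R, b / 2%:R, - (c / 2%:R)).
Proof. by rewrite /c2v /Defs.coord /Defs.mx2 !mxE /=. Qed.
Lemma coord_recF v : c2v (Defs.coord (recF v)) = v.
Proof. case: v => [[a b] c]; rewrite recF_mx2 coord_mx2 /=; congr (_, _, _); ffield. Qed.
Lemma recF_inj v w : recF v = recF w -> v = w.
Proof. by move=> H; rewrite -(coord_recF v) H coord_recF. Qed.
Lemma recF_coord M : in_sl2 M -> recF (c2v (Defs.coord M)) = M.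
Proof.
rewrite /in_sl2 /mxtrace sum2 => H.
have E : M j1 j1 = - M j0 j0 by apply/eqP; rewrite -addr_eq0 addrC; apply/eqP.
rewrite recF_mx2 /c2v /Defs.coord !mxE /=.
apply: mx2_eq; rewrite /Defs.mx2 !mxE /= ?z0 ?z1 ?E; ffield.
Qed.
Lemma in_sl2_recF v : in_sl2 (recF v).
Proof. rewrite /in_sl2 /mxtrace sum2 recF_mx2 /Defs.mx2 !mxE /=; fring. Qed.

Definition brF (v w : Fv) : Fv :=
  let a := v.1.1 * w.1.2 - v.1.2 * w.1.1 in
  let b := v.1.2 * w.2 - v.2 * w.1.2 in
  let c := v.2 * w.1.1 - v.1.1 * w.2 in
  (2%:R * a + 2%:R * c, 2%:R * a + 2%:R * b, 2%:R * b + 2%:R * c).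
Lemma lie_recF v w : lie (recF v) (recF w) = recF (brF v w).
Proof.
case: v => [[a b] c]; case: w => [[a' b'] c'].
rewrite /lie !recF_mx2 /Defs.mx2 /brF /=.
apply: mx2_eq; rewrite !mxE !sum2 !mxE /=; fring.
Qed.
Definition appF (A : 'M[F]_3) (v : Fv) : Fv :=
  (A i0 i0 * v.1.1 + A i0 i1 * v.1.2 + A i0 i2 * v.2,
   A i1 i0 * v.1.1 + A i1 i1 * v.1.2 + A i1 i2 * v.2,
   A i2 i0 * v.1.1 + A i2 i1 * v.1.2 + A i2 i2 * v.2).
Lemma lin_eq A M : lin A M = recF (appF A (c2v (Defs.coord M))).
Proof. rewrite /lin sum3 !mxE !sum3 /recF /appF /c2v /=. by []. Qed.
Lemma lin_recF A v : lin A (recF v) = recF (appF A v).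
Proof. by rewrite lin_eq coord_recF. Qed.

Definition mx3 (a b c d e f g h k : F) : 'M[F]_3 :=
  \matrix_(i < 3, j < 3) seq.nth 0 (seq.nth [::] [:: [:: a; b; c]; [:: d; e; f]; [:: g; h; k]] i) j.
Lemma mx3_eq (M N : 'M[F]_3) :
  M i0 i0 = N i0 i0 -> M i0 i1 = N i0 i1 -> M i0 i2 = N i0 i2 ->
  M i1 i0 = N i1 i0 -> M i1 i1 = N i1 i1 -> M i1 i2 = N i1 i2 ->
  M i2 i0 = N i2 i0 -> M i2 i1 = N i2 i1 -> M i2 i2 = N i2 i2 -> M = N.
Proof. move=> *; apply/matrixP; apply: ord3P; apply: ord3P => //. Qed.
Definition toF (B : M3) : 'M[F]_3 :=
  mx3 (zr (m00 B)) (zr (m01 B)) (zr (m02 B)) (zr (m10 B)) (zr (m11 B)) (zr (m12 B))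
      (zr (m20 B)) (zr (m21 B)) (zr (m22 B)).
Definition vF (u : V3) : Fv := (zr (v0 u), zr (v1 u), zr (v2 u)).
Lemma appF_toF B u : appF (toF B) (vF u) = vF (mv B u).
Proof.
case: B => a00 a01 a02 a10 a11 a12 a20 a21 a22; case: u => a b c; rewrite /appF /toF /mx3 /vF /mv !mxE /=.
by rewrite !zr_add !zr_mul.
Qed.
Lemma appF_mul A B v : appF (A *m B) v = appF A (appF B v).
Proof. case: v => [[a b] c]; rewrite /appF !mxE !sum3 /=; congr (_, _, _); fring. Qed.
Lemma appF1 v : appF 1%:M v = v.
Proof. case: v => [[a b] c]; rewrite /appF !mxE /=; congr (_, _, _); fring. Qed.
Lemma toF_mul A B : toF (mm A B) = toF A *m toF B.
Proof.
case: A => a00 a01 a02 a10 a11 a12 a20 a21 a22; case: B => b00 b01 b02 b10 b11 b12 b20 b21 b22.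
apply: mx3_eq; rewrite /toF /mx3 /mm !mxE sum3 !mxE /=; by rewrite !zr_add !zr_mul.
Qed.
Lemma toF_id : toF idM = 1%:M.
Proof. apply: mx3_eq; rewrite /toF /mx3 /idM !mxE /= ?zr0 ?zr1 //. Qed.
Lemma toF_inj A B : toF A = toF B -> A = B.
Proof.
case: A => a00 a01 a02 a10 a11 a12 a20 a21 a22; case: B => b00 b01 b02 b10 b11 b12 b20 b21 b22 H.
have E := fun i j => congr1 (fun M : 'M[F]_3 => M i j) H.
move: (E i0 i0) (E i0 i1) (E i0 i2) (E i1 i0) (E i1 i1) (E i1 i2) (E i2 i0) (E i2 i1) (E i2 i2).
rewrite /toF /mx3 !mxE /= => /zr_inj-> /zr_inj-> /zr_inj-> /zr_inj-> /zr_inj-> /zr_inj-> /zr_inj-> /zr_inj-> /zr_inj->.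
by [].
Qed.
Lemma brF_vF u w : brF (vF u) (vF w) = vF (br u w).
Proof.
case: u => a b c; case: w => a' b' c'; rewrite /brF /vF /br; cbn [fst snd v0 v1 v2].
have z2 : zr 2 = 2%:R by rewrite /zr /=; fring.
by rewrite !zr_add !zr_mul !zr_sub !zr_mul z2.
Qed.
Lemma vF_inj u w : vF u = vF w -> u = w.
Proof. case: u => a b c; case: w => a' b' c'; rewrite /vF; case => /zr_inj-> /zr_inj-> /zr_inj->; by []. Qed.

Definition Lie3 (A : 'M[F]_3) := forall v w, appF A (brF v w) = brF (appF A v) (appF A w).
Lemma LieAut_of A : A \in unitmx -> Lie3 A -> LieAut A.
Proof.
move=> U H; split=> // M N HM HN.
by rewrite -(recF_coord HM) -(recF_coord HN) lie_recF !lin_recF H lie_recF.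
Qed.
Lemma LieAut_Z A : LieAut A -> forall v w, appF A (brF v w) = brF (appF A v) (appF A w).
Proof.
case=> _ H v w; apply: recF_inj.
have := H (recF v) (recF w) (in_sl2_recF v) (in_sl2_recF w).
by rewrite lie_recF !lin_recF lie_recF.
Qed.
Lemma Lie3_mul A B : Lie3 A -> Lie3 B -> Lie3 (A *m B).
Proof. by move=> HA HB v w; rewrite !appF_mul HB HA. Qed.
Lemma Lie3_1 : Lie3 1%:M.
Proof. by move=> v w; rewrite !appF1. Qed.

Definition int2Z (n : int) : Z := match n with Posz m => Z.of_nat m | Negz m => (- Z.of_nat m.+1)%Z end.
Lemma intr_zr (n : int) : n%:~R = zr (int2Z n).
Proof.
case: n => m /=.
  by rewrite -pmulrn (@zr_rep _ m 0%nat) /= ?subr0 //; lia.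
rewrite NegzE mulrNz -pmulrn (@zr_rep _ 0%nat m.+1) /= ?sub0r //; lia.
Qed.
Lemma zr_intr z : exists n : int, n%:~R = zr z.
Proof.
exists ((Z.to_nat z)%:Z - (Z.to_nat (- z))%:Z); by rewrite intrB -!pmulrn.
Qed.
Lemma inL_iff M : inL M <-> exists u, M = recF (vF u).
Proof.
split.
  case=> a [b [c ->]]; exists (mkV (int2Z a) (int2Z b) (int2Z c)).
  by rewrite /recF /vF /= !intr_zr.
case=> u ->; case: (zr_intr (v0 u)) => a Ha; case: (zr_intr (v1 u)) => b Hb;
  case: (zr_intr (v2 u)) => c Hc.
by exists a, b, c; rewrite Ha Hb Hc.
Qed.
Lemma mv_id w : mv idM w = w.
Proof. case: w => a b c; rewrite /mv /idM; cbn [m00 m01 m02 m10 m11 m12 m20 m21 m22 v0 v1 v2]; congr mkV; ring. Qed.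
Lemma AutZ_of B C : mm B C = idM -> Lie3 (toF B) -> AutZ (toF B).
Proof.
move=> HBC HL; split; [|split].
- apply: LieAut_of => //.
  have : toF B *m toF C = 1%:M by rewrite -toF_mul HBC toF_id.
  by case/mulmx1_unit.
- move=> M /inL_iff [u ->]; apply/inL_iff; exists (mv B u).
  by rewrite lin_recF appF_toF.
- move=> N /inL_iff [w ->]; exists (recF (vF (mv C w))); split.
    by apply/inL_iff; exists (mv C w).
  by rewrite lin_recF appF_toF -mv_mm HBC mv_id.
Qed.

Lemma mm_cols B c0 c1 c2 : mv B c0 = mkV 1 0 0 -> mv B c1 = mkV 0 1 0 -> mv B c2 = mkV 0 0 1 ->
  mm B (mkM (v0 c0) (v0 c1) (v0 c2) (v1 c0) (v1 c1) (v1 c2) (v2 c0) (v2 c1) (v2 c2)) = idM.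
Proof.
case: B => b00 b01 b02 b10 b11 b12 b20 b21 b22; case: c0 => x0 x1 x2; case: c1 => y0 y1 y2; case: c2 => z0 z1 z2.
rewrite /mv /mm /idM; cbn [m00 m01 m02 m10 m11 m12 m20 m21 m22 v0 v1 v2] => H0 H1 H2.
vsplit H0; vsplit H1; vsplit H2. congr mkM; lia.
Qed.
Definition unitZ (j : 'I_3) : V3 :=
  if val j == 0%nat then mkV 1 0 0 else if val j == 1%nat then mkV 0 1 0 else mkV 0 0 1.
Lemma bas_recF j : bas F j = recF (vF (unitZ j)).
Proof.
move: j; apply: ord3P; rewrite /bas /unitZ /vF /= ?zr0 ?zr1 /recF /=;
  apply: mx2_eq; rewrite /Defs.ex /Defs.ey /Defs.ez /Defs.mx2 !mxE /=; fring.
Qed.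
Lemma bas_inL j : inL (bas F j).
Proof. by apply/inL_iff; exists (unitZ j); apply: bas_recF. Qed.
Lemma appF_unit A j : appF A (vF (unitZ j)) = (A i0 j, A i1 j, A i2 j).
Proof.
move: j; apply: ord3P; rewrite /appF /unitZ /vF /= ?zr0 ?zr1; congr (_, _, _); fring.
Qed.
Lemma AutZ_to A : AutZ A -> exists B, A = toF B /\ PZ B.
Proof.
case=> HL [Hin Hsur].
have col : forall j, exists u, (A i0 j, A i1 j, A i2 j) = vF u.
  move=> j; case/inL_iff: (Hin _ (bas_inL j)) => u Hu; exists u.
  by rewrite -appF_unit; apply: recF_inj; rewrite -lin_recF -bas_recF.
case: (col i0) => u0 [E00 E10 E20]; case: (col i1) => u1 [E01 E11 E21]; case: (col i2) => u2 [E02 E12 E22].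
pose B := mkM (v0 u0) (v0 u1) (v0 u2) (v1 u0) (v1 u1) (v1 u2) (v2 u0) (v2 u1) (v2 u2).
have EA : A = toF B by apply: mx3_eq; rewrite /toF /mx3 !mxE /=.
exists B; split => //; split.
  move=> u w; apply: vF_inj.
  rewrite -appF_toF -brF_vF -EA LieAut_Z // EA !appF_toF brF_vF //.
have cinv : forall j, exists c, mv B c = unitZ j.
  move=> j; case: (Hsur _ (bas_inL j)) => M [/inL_iff [c ->] Hc]; exists c.
  apply: vF_inj; rewrite -appF_toF -EA; apply: recF_inj; by rewrite -lin_recF Hc bas_recF.
case: (cinv i0) => c0 H0; case: (cinv i1) => c1 H1; case: (cinv i2) => c2 H2.
pose C := mkM (v0 c0) (v0 c1) (v0 c2) (v1 c0) (v1 c1) (v1 c2) (v2 c0) (v2 c1) (v2 c2).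
have HBC : mm B C = idM by apply: mm_cols.
exists C; split => //.
apply: toF_inj; rewrite toF_mul toF_id; apply: mulmx1C; by rewrite -toF_mul HBC toF_id.
Qed.

Definition comp (v : Fv) (i : 'I_3) : F :=
  if val i == 0%nat then v.1.1 else if val i == 1%nat then v.1.2 else v.2.
Lemma coord_comp M i : Defs.coord M i 0 = comp (c2v (Defs.coord M)) i.
Proof. by move: i; apply: ord3P. Qed.
Lemma ad_mxE a (Ha : in_sl2 a) i j :
  ad_mx a i j = comp (brF (c2v (Defs.coord a)) (vF (unitZ j))) i.
Proof.
by rewrite /ad_mx /mat_of mxE coord_comp bas_recF -{1}(recF_coord Ha) lie_recF coord_recF.
Qed.
Lemma exp_nilE N i j : exp_nil N i j =
  (1%:M : 'M[F]_3) i j + N i j + 2%:R^-1 * (N i i0 * N i0 j + N i i1 * N i1 j + N i i2 * N i2 j).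
Proof.
rewrite /exp_nil sum3 !mxE /= sum3 expr1 (_ : 0`! = 1)// (_ : 1`! = 1)// (_ : 2`! = 2)//.
by rewrite invr1 !mul1r.
Qed.
Lemma inv_unique (A B : 'M[F]_3) : A *m B = 1%:M -> invmx A = B.
Proof.
move=> H; have [UA _] := mulmx1_unit H.
by rewrite -[invmx A]mulmx1 -H mulmxA mulVmx // mul1mx.
Qed.


Lemma mx3_of (M : 'M[F]_3) : M = mx3 (M i0 i0) (M i0 i1) (M i0 i2) (M i1 i0) (M i1 i1) (M i1 i2) (M i2 i0) (M i2 i1) (M i2 i2).
Proof. apply: mx3_eq; by rewrite /mx3 !mxE. Qed.
Lemma exp_mx3 n00 n01 n02 n10 n11 n12 n20 n21 n22 : exp_nil (mx3 n00 n01 n02 n10 n11 n12 n20 n21 n22) =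
  mx3 (1 + n00 + 2%:R^-1 * (n00 * n00 + n01 * n10 + n02 * n20)) (0 + n01 + 2%:R^-1 * (n00 * n01 + n01 * n11 + n02 * n21)) (0 + n02 + 2%:R^-1 * (n00 * n02 + n01 * n12 + n02 * n22)) (0 + n10 + 2%:R^-1 * (n10 * n00 + n11 * n10 + n12 * n20)) (1 + n11 + 2%:R^-1 * (n10 * n01 + n11 * n11 + n12 * n21)) (0 + n12 + 2%:R^-1 * (n10 * n02 + n11 * n12 + n12 * n22)) (0 + n20 + 2%:R^-1 * (n20 * n00 + n21 * n10 + n22 * n20)) (0 + n21 + 2%:R^-1 * (n20 * n01 + n21 * n11 + n22 * n21)) (1 + n22 + 2%:R^-1 * (n20 * n02 + n21 * n12 + n22 * n22)).
Proof. apply: mx3_eq; rewrite exp_nilE /mx3 !mxE /=; fring. Qed.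
Lemma ad_mx3 a (Ha : in_sl2 a) : ad_mx a =
  let c := c2v (Defs.coord a) in
  mx3 (brF c (1,0,0)).1.1 (brF c (0,1,0)).1.1 (brF c (0,0,1)).1.1
      (brF c (1,0,0)).1.2 (brF c (0,1,0)).1.2 (brF c (0,0,1)).1.2
      (brF c (1,0,0)).2 (brF c (0,1,0)).2 (brF c (0,0,1)).2.
Proof. rewrite [LHS]mx3_of !ad_mxE /comp /unitZ /vF /= ?zr0 ?zr1 //. Qed.
Lemma toF_gX : toF gX = exp_nil (ad_mx (Defs.xs F)).
Proof.
have Hs : in_sl2 (Defs.xs F) by rewrite /in_sl2 /mxtrace sum2 /Defs.xs /Defs.mx2 !mxE /=; fring.
rewrite (ad_mx3 Hs) /Defs.xs coord_mx2 exp_mx3 /toF /gX /brF /=.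
congr mx3; rewrite /zr /=; ffield.
Qed.
Lemma toF_gY : toF gY = exp_nil (ad_mx (Defs.ys F)).
Proof.
have Hs : in_sl2 (Defs.ys F) by rewrite /in_sl2 /mxtrace sum2 /Defs.ys /Defs.mx2 !mxE /=; fring.
rewrite (ad_mx3 Hs) /Defs.ys coord_mx2 exp_mx3 /toF /gY /brF /=.
congr mx3; rewrite /zr /=; ffield.
Qed.
Lemma toF_gZ : toF gZ = exp_nil (ad_mx (Defs.zs F)).
Proof.
have Hs : in_sl2 (Defs.zs F) by rewrite /in_sl2 /mxtrace sum2 /Defs.zs /Defs.mx2 !mxE /=; fring.
rewrite (ad_mx3 Hs) /Defs.zs coord_mx2 exp_mx3 /toF /gZ /brF /=.
congr mx3; rewrite /zr /=; ffield.
Qed.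
Lemma appF_mx3 a b c d e f g h k v : appF (mx3 a b c d e f g h k) v =
  (a * v.1.1 + b * v.1.2 + c * v.2, d * v.1.1 + e * v.1.2 + f * v.2, g * v.1.1 + h * v.1.2 + k * v.2).
Proof. by rewrite /appF /mx3 !mxE. Qed.
Ltac lie3_tac := move=> [[a b] c] [[a' b'] c']; rewrite /toF appF_mx3 /=; rewrite !appF_mx3 /brF /zr /=;
  congr (_, _, _); fring.
Lemma Lie3_gen k : Lie3 (toF (zgen k)).
Proof. case: k; rewrite /zgen /gX /gY /gZ /gXi /gYi /gZi; lie3_tac. Qed.
Lemma Lie3_s01 : Lie3 (toF s01). Proof. rewrite /s01; lie3_tac. Qed.
Lemma Lie3_s12 : Lie3 (toF s12). Proof. rewrite /s12; lie3_tac. Qed.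
Lemma Lie3_s20 : Lie3 (toF s20). Proof. rewrite /s20; lie3_tac. Qed.
Lemma GZ_Lie3 B : GZ B -> Lie3 (toF B).
Proof. elim=> [|k B' _ IH]; first by rewrite toF_id; exact: Lie3_1. by rewrite toF_mul; apply: Lie3_mul => //; apply: Lie3_gen. Qed.
Lemma toF_inv k : toF (zgen (ginv k)) = invmx (toF (zgen k)).
Proof. symmetry; apply: inv_unique; by rewrite -toF_mul (proj1 (zgen_inv k)) toF_id. Qed.
Lemma toF_gen_Ggrp k : Ggrp (toF (zgen k)).
Proof.
have bX : Ggrp (toF gX) by apply: gen_base; rewrite toF_gX; tauto.
have bY : Ggrp (toF gY) by apply: gen_base; rewrite toF_gY; tauto.
have bZ : Ggrp (toF gZ) by apply: gen_base; rewrite toF_gZ; tauto.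
case: k; [exact: bX | exact: bY | exact: bZ | | | ].
- by rewrite -[zgen kXi]/(zgen (ginv kX)) toF_inv; apply: gen_inv.
- by rewrite -[zgen kYi]/(zgen (ginv kY)) toF_inv; apply: gen_inv.
- by rewrite -[zgen kZi]/(zgen (ginv kZ)) toF_inv; apply: gen_inv.
Qed.
Lemma GZ_Ggrp B : GZ B -> Ggrp (toF B).
Proof.
elim=> [|k B' _ IH]; first by rewrite toF_id; exact: gen_one.
rewrite toF_mul; apply: gen_mul => //; apply: toF_gen_Ggrp.
Qed.
Lemma Ggrp_GZ g : Ggrp g -> exists B, GZ B /\ g = toF B.
Proof.
elim=> [|a [->|[->|->]]|a _ [B [HB ->]]|a b _ [B [HB ->]] _ [B' [HB' ->]]].
- by exists idM; split; [constructor | rewrite toF_id].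
- by exists gX; split; [apply: (GZ_gen kX) | rewrite toF_gX].
- by exists gY; split; [apply: (GZ_gen kY) | rewrite toF_gY].
- by exists gZ; split; [apply: (GZ_gen kZ) | rewrite toF_gZ].
- case: (GZ_inv _ HB) => B' [HB' [E1 E2]]; exists B'; split => //.
  by apply: inv_unique; rewrite -toF_mul E1 toF_id.
- by exists (mm B B'); split; [apply: GZ_mul | rewrite toF_mul].
Qed.

Definition sZ (u v : 'I_3) : M3 :=
  if ((val u == 0%nat) && (val v == 1%nat)) || ((val u == 1%nat) && (val v == 0%nat)) then s01
  else if ((val u == 1%nat) && (val v == 2%nat)) || ((val u == 2%nat) && (val v == 1%nat)) then s12
  else s20.
Lemma recFN v : - recF v = recF (- v.1.1, - v.1.2, - v.2).
Proof. by rewrite /recF !scaleNr !opprD. Qed.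
Lemma mat_of_mx3 (f : 'I_3 -> 'M[F]_2) : mat_of f =
  mx3 (Defs.coord (f i0) i0 0) (Defs.coord (f i1) i0 0) (Defs.coord (f i2) i0 0)
      (Defs.coord (f i0) i1 0) (Defs.coord (f i1) i1 0) (Defs.coord (f i2) i1 0)
      (Defs.coord (f i0) i2 0) (Defs.coord (f i1) i2 0) (Defs.coord (f i2) i2 0).
Proof. by rewrite [LHS]mx3_of /mat_of !mxE. Qed.
Lemma coord_negbas k i : Defs.coord (- bas F k) i 0 = - comp (vF (unitZ k)) i.
Proof.
rewrite bas_recF recFN coord_comp coord_recF /comp /=.
by case: (val i == 0%nat); case: (val i == 1%nat).
Qed.
Lemma neg_swap_toF u v : u != v -> neg_swap F u v = toF (sZ u v).
Proof.
move: u v; apply: ord3P; apply: ord3P; rewrite //= => _;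
rewrite /neg_swap mat_of_mx3 /= !coord_negbas /comp /unitZ /vF /sZ /= /toF /s01 /s12 /s20 /=;
congr mx3; rewrite /zr /=; fring.
Qed.

Definition sgood (S : M3) := [/\ mm S S = idM, (forall B, GZ B -> GZ (mm (mm S B) S)),
  GZ (mm S Dm), ~ GZ S & Lie3 (toF S)].
Lemma sZ_good u v : sgood (sZ u v).
Proof.
have H01 : sgood s01.
  split; [exact: s01_sq | exact: (s_normal _ sc01 s01_sq s01_conj) | exact: s01_D | exact: s01_notG | exact: Lie3_s01].
have H12 : sgood s12.
  split; [exact: s12_sq | exact: (s_normal _ sc12 s12_sq s12_conj) | exact: s12_D | exact: s12_notG | exact: Lie3_s12].
have H20 : sgood s20.
  split; [exact: s20_sq | exact: (s_normal _ sc20 s20_sq s20_conj) | exact: s20_D | exact: s20_notG | exact: Lie3_s20].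
rewrite /sZ; case: ifP => _ //; case: ifP => _ //.
Qed.
Lemma Hgen_iff (s : 'M[F]_3) (Hss : s *m s = 1%:M) h : Defs.gen (fun a => a = s) h -> h = 1%:M \/ h = s.
Proof.
elim=> [|a ->|a _ [->|->]|a b _ [->|->] _ [->|->]];
  try (by left); try (by right); try (by left; rewrite invmx1); try (by right; apply: inv_unique);
  try (by left; rewrite mul1mx); try (by right; rewrite mul1mx); try (by right; rewrite mulmx1).
Qed.
Lemma Zassoc S g D : mm S S = idM -> mm S (mm (mm (mm S g) S) (mm S D)) = mm g D.
Proof.
move=> Hss; rewrite !mm_assoc Hss mm1l -(mm_assoc g S S) Hss mm1r; by [].
Qed.
Lemma main u v (huv : u != v) :
  let s := neg_swap F u v in
  let H := Defs.gen (fun a => a = s) in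
  [/\ s *m s = 1, s != 1,
      (forall A, AutZ A <-> exists h g, H h /\ Ggrp g /\ A = h *m g),
      (forall h, H h -> Ggrp h -> h = 1) &
      (forall h g, H h -> Ggrp g -> Ggrp (invmx h *m g *m h))].
Proof.
rewrite /= (neg_swap_toF huv).
case: (sZ_good u v); set S := sZ u v => Hss Hnorm HD HnG HL.
have Hss' : toF S *m toF S = 1%:M by rewrite -toF_mul Hss toF_id.
have HS : forall h, Defs.gen (fun a => a = toF S) h -> h = 1%:M \/ h = toF S := Hgen_iff Hss'.
split.
- exact: Hss'.
- apply/eqP => E; apply: HnG; have -> : S = idM by apply: toF_inj; rewrite E toF_id.
  exact: GZ1.
- move=> A; split.
  + case/AutZ_to => B [-> HP].
    case: (descent _ HP) => g [Hg [E|E]]; case: (GZ_inv _ Hg) => g' [Hg' [E1 E2]].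
    * exists 1%:M, (toF g'); split; [exact: gen_one | split; [exact: GZ_Ggrp | ]].
      by rewrite mul1mx; congr toF; rewrite -(mm1l B) -E2 -mm_assoc E mm1r.
    * exists (toF S), (toF (mm (mm (mm S g') S) (mm S Dm))); split; [exact: gen_base | split].
        by apply: GZ_Ggrp; apply: GZ_mul => //; apply: Hnorm.
      rewrite -toF_mul Zassoc //; congr toF; by rewrite -(mm1l B) -E2 -mm_assoc E.
  + case=> h [g [Hh [Hg ->]]]; case: (Ggrp_GZ Hg) => Bg [HBg ->].
    case: (GZ_inv _ HBg) => Bg' [_ [E1 _]].
    case: (HS h Hh) => ->.
      rewrite mul1mx; apply: (AutZ_of (C := Bg')) => //; exact: GZ_Lie3.
    rewrite -toF_mul; apply: (AutZ_of (C := mm Bg' S)).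
      by rewrite mm_assoc -(mm_assoc S Bg Bg') E1 mm1r Hss.
    by rewrite toF_mul; apply: Lie3_mul => //; apply: GZ_Lie3.
- move=> h Hh Hg; case: (HS h Hh) => // E; subst h.
  case: (Ggrp_GZ Hg) => B [HB /toF_inj E]; by rewrite E in HnG.
- move=> h g Hh Hg; case: (Ggrp_GZ Hg) => Bg [HBg ->].
  case: (HS h Hh) => ->.
    by rewrite invmx1 mul1mx mulmx1; exact: GZ_Ggrp.
  rewrite (inv_unique Hss') -!toF_mul; apply: GZ_Ggrp; exact: Hnorm.
Qed.

End Fpart.


Unset Implicit Arguments.
Theorem theorem5p6 (F : fieldType) (charF0 : [pchar F] =i pred0)
    (u v : 'I_3) (huv : u != v) :
  let s := neg_swap F u v in
  let H := gen (fun a => a = s) in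
  [/\ s *m s = 1, s != 1,
      (forall A, AutZ A <-> exists h g, H h /\ Ggrp g /\ A = h *m g),
      (forall h, H h -> Ggrp h -> h = 1) &
      (forall h g, H h -> Ggrp g -> Ggrp (invmx h *m g *m h))].
Proof. exact: (main charF0 huv). Qed.
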